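(* Let $n\ge 3$, $m\ge 2$, and $F,R$ be as in the context. The group $(R\cap[F,F])/[R,F]$ is generated by the images of the elements $[s_i,s_j]$ ($1\le i<j-1\le n-2$), $[s_i,s_{i+1},s_i]$ and $[s_i,s_{i+1},s_is_{i+1}^{-1}]$ ($1\le i\le n-2$), and $[[s_i,s_{i+1}],[s_{i+1},s_{i+2}]]$ ($1\le i\le n-3$).
   Context: Commutator conventions: $[a,b]=a^{-1}b^{-1}ab$, $a^b=b^{-1}ab$, and commutators are left-normed: $[a_1,\dots,a_k]=[[a_1,\dots,a_{k-1}],a_k]$. Let $F$ be the free group on $s_1,\dots,s_{n-1}$ and let $R$ be the normal closure in $F$ of the following relators: $s_i^m$ ($1\le i\le n-1$); $[s_i,s_j]$ ($1\le i<j-1\le n-2$); $[s_i,s_{i+1},s_i]$ and $[s_i,s_{i+1},s_{i+1}]$ ($1\le i\le n-2$); $[[s_i,s_{i+1}],[s_{i+1},s_{i+2}]]$ ($1\le i\le n-3$). It is known that $F/R\cong \mathrm{UT}_n(\mathbb Z/m\mathbb Z)$ via $s_i\mapsto I+E_{i,i+1}$. *)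

(* Defs.v *)
(* A concrete model of the free group on the
   generators s_1, ..., s_{n-1}: freely reduced words over letters
   (i, b), where (i, false) = s_i and (i, true) = s_i^{-1}. *)
From mathcomp Require Import all_boot.
Set Implicit Arguments. Unset Strict Implicit. Unset Printing Implicit Defensive.

Definition letter := (nat * bool)%type.
Definition word := seq letter.

Definition linv (a : letter) : letter := (a.1, ~~ a.2).

Definition push (a : letter) (w : word) : word :=
  match w with
  | b :: w' => if b == linv a then w' else a :: w
  | [::] => [:: a]
  end.

Definition wone : word := [::].
Definition wmul (x y : word) : word := foldr push y x.
Definition winv (x : word) : word := rev (map linv x).

Fixpoint reduced (w : word) : bool :=
  match w with
  | a :: ((b :: _) as w') => (b != linv a) && reduced w'
  | _ => true
  end.

Definition inF (n : nat) (w : word) : bool :=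
  reduced w && all (fun a => (0 < a.1) && (a.1 < n)) w.

Definition gen (i : nat) : word := [:: (i, false)].
Definition wpow (x : word) (k : nat) : word := iter k (wmul x) wone.

(* conventions: [a,b] = a^-1 b^-1 a b, a^b = b^-1 a b *)
Definition comm (a b : word) : word := wmul (winv a) (wmul (winv b) (wmul a b)).
Definition conj (a b : word) : word := wmul (winv b) (wmul a b).
Definition comm3 (a b c : word) : word := comm (comm a b) c.

Inductive Gen (S : word -> Prop) : word -> Prop :=
| Gen_one : Gen S wone
| Gen_in w : S w -> Gen S w
| Gen_mul x y : Gen S x -> Gen S y -> Gen S (wmul x y)
| Gen_inv x : Gen S x -> Gen S (winv x).

Definition NormClos (n : nat) (S : word -> Prop) : word -> Prop :=
  Gen (fun w => exists r f, S r /\ inF n f /\ w = conj r f).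

(* the defining relators (indices as in the paper, 1-based) *)
Definition Relators (n m : nat) (w : word) : Prop :=
  (exists i, 1 <= i <= n - 1 /\ w = wpow (gen i) m) \/
  (exists i j, 1 <= i /\ i + 1 < j /\ j <= n - 1 /\ w = comm (gen i) (gen j)) \/
  (exists i, 1 <= i <= n - 2 /\ w = comm3 (gen i) (gen i.+1) (gen i)) \/
  (exists i, 1 <= i <= n - 2 /\ w = comm3 (gen i) (gen i.+1) (gen i.+1)) \/
  (exists i, 1 <= i <= n - 3 /\
     w = comm (comm (gen i) (gen i.+1)) (comm (gen i.+1) (gen i.+2))).

Definition Rsub (n m : nat) : word -> Prop := NormClos n (Relators n m).

Definition FF (n : nat) : word -> Prop :=
  Gen (fun w => exists a b, inF n a /\ inF n b /\ w = comm a b).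

Definition RF (n m : nat) : word -> Prop :=
  Gen (fun w => exists r f, Rsub n m r /\ inF n f /\ w = comm r f).

Definition Gens (n : nat) (w : word) : Prop :=
  (exists i j, 1 <= i /\ i + 1 < j /\ j <= n - 1 /\ w = comm (gen i) (gen j)) \/
  (exists i, 1 <= i <= n - 2 /\ w = comm3 (gen i) (gen i.+1) (gen i)) \/
  (exists i, 1 <= i <= n - 2 /\
     w = comm3 (gen i) (gen i.+1) (wmul (gen i) (winv (gen i.+1)))) \/
  (exists i, 1 <= i <= n - 3 /\
     w = comm (comm (gen i) (gen i.+1)) (comm (gen i.+1) (gen i.+2))).

(* Main.v *)
Require Import Defs.
From mathcomp Require Import all_boot zify.
From Stdlib Require Import ZArith Lia.
Set Implicit Arguments. Unset Strict Implicit. Unset Printing Implicit Defensive.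

Lemma linvK a : linv (linv a) = a.
Proof. by case: a => i [] . Qed.


Lemma red_cons a w : reduced (a :: w) -> reduced w.
Proof. by case: w => //= b w /andP[]. Qed.

Lemma push_red a w : reduced w -> reduced (push a w).
Proof.
case: w => //= b w Hw; case: ifP => [_|Hb]; first exact: red_cons Hw.
by rewrite /= Hb.
Qed.

Lemma pushK a w : reduced w -> push a (push (linv a) w) = w.
Proof.
case: w => [|b w] /=; first by rewrite eqxx.
case: ifP => [/eqP Hb Hw| Hb Hw] /=.
- rewrite linvK in Hb; subst b.
  case: w Hw => [|c w] //= /andP[Hc _]. by rewrite (negbTE Hc).
- by rewrite /= ?linvK eqxx.
Qed.

Lemma pushKV a w : reduced w -> push (linv a) (push a w) = w.
Proof. by move=> Hw; rewrite -{2}(linvK a) pushK. Qed.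

Lemma wmul_red x y : reduced y -> reduced (wmul x y).
Proof. by elim: x => //= a x IH Hy; apply: push_red; apply: IH. Qed.

Lemma wmul_push a w z : reduced z -> wmul (push a w) z = push a (wmul w z).
Proof.
case: w => [|b w] //= Hz; case: ifP => //= /eqP ->.
by rewrite pushK // wmul_red.
Qed.

Lemma wmulA x y z : reduced z -> wmul (wmul x y) z = wmul x (wmul y z).
Proof.
move=> Hz; elim: x => //= a x IH. by rewrite wmul_push // IH.
Qed.

Lemma wmul1 x : reduced x -> wmul x wone = x.
Proof.
elim: x => //= a x IH Hx; rewrite IH; last exact: red_cons Hx.
case: x Hx {IH} => //= b x /andP[Hb _]; case: ifP => // /eqP E.
by rewrite E eqxx in Hb.
Qed.

Lemma wmul_cat x y z : wmul (x ++ y) z = wmul x (wmul y z).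
Proof. by rewrite /wmul foldr_cat. Qed.

Lemma winv_cons a x : winv (a :: x) = winv x ++ [:: linv a].
Proof. by rewrite /winv /= rev_cons cats1. Qed.

Lemma wmulVK x z : reduced z -> wmul (winv x) (wmul x z) = z.
Proof.
move=> Hz; elim: x => //= a x IH.
rewrite winv_cons wmul_cat /= pushKV ?IH //. exact: wmul_red.
Qed.

Lemma winvK x : winv (winv x) = x.
Proof.
rewrite /winv map_rev revK -map_comp -[RHS]map_id.
by apply: eq_map => a /=; rewrite linvK.
Qed.

Lemma wmulKV x z : reduced z -> wmul x (wmul (winv x) z) = z.
Proof. by move=> Hz; rewrite -{1}(winvK x) wmulVK. Qed.

Definition rrel (a b : letter) := b != linv a.

Lemma reducedE w : reduced w = sorted rrel w.
Proof. by elim: w => // a [|b w] //= ->. Qed.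

Lemma winv_red x : reduced x -> reduced (winv x).
Proof.
rewrite !reducedE /winv rev_sorted sorted_map.
apply: sub_sorted => a b /=; rewrite /rrel; apply: contra => /eqP ->.
by rewrite linvK.
Qed.

Lemma wmulV x : reduced x -> wmul x (winv x) = wone.
Proof. by move=> Hx; rewrite -(wmul1 (winv_red Hx)) wmulKV. Qed.

Lemma wmulVx x : reduced x -> wmul (winv x) x = wone.
Proof. by move=> Hx; rewrite -{2}(wmul1 Hx) wmulVK. Qed.

Lemma red1 : reduced wone. Proof. by []. Qed.

Hint Resolve wmul_red winv_red red1 : core.

Lemma winvM x y : reduced x -> reduced y ->
  winv (wmul x y) = wmul (winv y) (winv x).
Proof.
move=> Hx Hy.
rewrite -[RHS](wmulVK (wmul x y)); last by auto.
rewrite wmulA; last by auto.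
rewrite wmulKV; last by auto.
by rewrite (wmulV Hx) wmul1; auto.
Qed.

Hint Resolve wmul_red winv_red red1 : core.

Lemma Gen_sub (S T : word -> Prop) w :
  (forall u, S u -> Gen T u) -> Gen S w -> Gen T w.
Proof.
move=> H; elim=> {w} [|w /H //|x y _ Hx _ Hy|x _ Hx].
- exact: Gen_one.
- exact: Gen_mul.
- exact: Gen_inv.
Qed.

Lemma Gen_ind' (S : word -> Prop) (P : word -> Prop) :
  P wone -> (forall u, S u -> P u) -> (forall x y, P x -> P y -> P (wmul x y)) ->
  (forall x, P x -> P (winv x)) -> forall w, Gen S w -> P w.
Proof. by move=> H1 HS HM HV w; elim=> {w} //; auto. Qed.

Lemma conj1 f : reduced f -> conj wone f = wone.
Proof. by move=> Hf; rewrite /conj /= wmulVx. Qed.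

Lemma conjM x y f : reduced f ->
  conj (wmul x y) f = wmul (conj x f) (conj y f).
Proof.
move=> Hf; rewrite /conj wmulA // [RHS]wmulA; last by auto.
by rewrite wmulA; [rewrite wmulKV | ]; auto.
Qed.

Lemma conjV x f : reduced x -> reduced f -> conj (winv x) f = winv (conj x f).
Proof.
move=> Hx Hf; rewrite /conj [RHS]winvM; try by auto.
rewrite winvK. rewrite winvM // wmulA //.
Qed.

Lemma conj_conj r g f : reduced r -> reduced g -> reduced f ->
  conj (conj r g) f = conj r (wmul g f).
Proof.
move=> Hr Hg Hf; rewrite /conj (wmulA (winv g)) // (wmulA r) //.
rewrite winvM // wmulA //; auto.
Qed.

Lemma conj_by1 r : reduced r -> conj r wone = r.
Proof. by move=> Hr; rewrite /conj /= wmul1. Qed.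

Lemma conj_eq r f : reduced r -> reduced f -> conj r f = wmul r (comm r f).
Proof. by move=> Hr Hf; rewrite /comm wmulKV //; auto. Qed.

Lemma Gen_red (S : word -> Prop) w : (forall u, S u -> reduced u) -> Gen S w -> reduced w.
Proof. by move=> H; elim=> //; auto. Qed.

Lemma Gen_conj (S T : word -> Prop) f w :
  (forall u, S u -> reduced u) -> reduced f ->
  (forall u, S u -> Gen T (conj u f)) -> Gen S w -> Gen T (conj w f).
Proof.
move=> Hr Hf H; elim=> {w} [|w /H //|x y Gx Hx Gy Hy|x Gx Hx].
- rewrite conj1 //; exact: Gen_one.
- rewrite conjM //; exact: Gen_mul.
- rewrite conjV //; [exact: Gen_inv | exact: Gen_red Gx].
Qed.

Section S.
Variable n : nat.

Definition rng (a : letter) := (0 < a.1) && (a.1 < n).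

Lemma inF_red w : inF n w -> reduced w.
Proof. by case/andP. Qed.

Lemma all_push a w : rng a -> all rng w -> all rng (push a w).
Proof. by case: w => //= [->//|b w Ha /andP[Hb Hw]]; case: ifP => _ //=; rewrite Ha Hb. Qed.

Lemma inF_mul x y : inF n x -> inF n y -> inF n (wmul x y).
Proof.
case/andP=> _ Hx /andP[Hy Ay]; rewrite /inF wmul_red //=.
elim: x Hx => //= a x IH /andP[Ha Hx]; apply: all_push => //; exact: IH.
Qed.

Lemma inF_inv x : inF n x -> inF n (winv x).
Proof.
case/andP=> Hx Ax; rewrite /inF winv_red //= /winv all_rev all_map.
by apply: sub_all Ax => a.
Qed.

Lemma inF1 : inF n wone. Proof. by []. Qed.

Lemma inF_gen i : 0 < i < n -> inF n (gen i).
Proof. by rewrite /inF /gen /= andbT. Qed.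

Lemma inF_comm x y : inF n x -> inF n y -> inF n (comm x y).
Proof. by move=> Hx Hy; rewrite /comm; do ! (apply: inF_mul || apply: inF_inv). Qed.

Lemma inF_conj x y : inF n x -> inF n y -> inF n (conj x y).
Proof. by move=> Hx Hy; rewrite /conj; do ! (apply: inF_mul || apply: inF_inv). Qed.

Lemma inF_wpow x k : inF n x -> inF n (wpow x k).
Proof. by move=> Hx; elim: k => //= k IH; apply: inF_mul. Qed.

Lemma Gen_inF (S : word -> Prop) w : (forall u, S u -> inF n u) -> Gen S w -> inF n w.
Proof.
move=> H; elim=> {w} [//|w /H //|x y _ Hx _ Hy|x _ Hx]; [exact: inF_mul|exact: inF_inv].
Qed.

End S.
Hint Resolve wmul_red winv_red red1 : core.

Ltac rd := solve [repeat (apply wmul_red || apply winv_red || assumption || exact red1)].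
Ltac gsimp := repeat (rewrite ?winvK; first [rewrite winvM | rewrite wmulA | rewrite wmulKV | rewrite wmulVK | rewrite wmulV | rewrite wmulVx | rewrite wmul1]; try rd).

Lemma key x a c : reduced x -> reduced a -> reduced c ->
  comm x c = wmul (comm x a) (conj (winv (comm x (wmul a (winv c)))) c).
Proof.
move=> Hx Ha Hc; by rewrite /comm /conj; gsimp.
Qed.

Lemma key2 x a c : reduced x -> reduced a -> reduced c ->
  comm x (wmul a (winv c)) = winv (conj (wmul (winv (comm x a)) (comm x c)) (winv c)).
Proof. by move=> Hx Ha Hc; rewrite /comm /conj; gsimp. Qed.

Ltac fin := repeat (apply: inF_comm || apply: inF_mul || apply: inF_inv || apply: inF_wpow || (apply: inF_gen; lia)).

Section T.
Variables n m : nat.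

Definition Hs := Gen (fun u => Gens n u \/ RF n m u).

Lemma Rel_inF r : Relators n m r -> inF n r.
Proof.
case=> [[i [Hi ->]]|[[i [j [Hi [Hij [Hj ->]]]]]|[[i [Hi ->]]|[[i [Hi ->]]|[i [Hi ->]]]]]].
- by apply: inF_wpow; apply: inF_gen; lia.
- by apply: inF_comm; apply: inF_gen; lia.
- by rewrite /comm3; fin.
- by rewrite /comm3; fin.
- by fin.
Qed.

Lemma rel_R r : Relators n m r -> Rsub n m r.
Proof.
move=> Hr; have Hred := inF_red (Rel_inF Hr).
rewrite -(conj_by1 Hred); apply: Gen_in; exists r, wone; split=> //.
Qed.

Lemma R_inF w : Rsub n m w -> inF n w.
Proof.
apply: Gen_inF => u [r [f [Hr [Hf ->]]]]; apply: inF_conj => //; exact: Rel_inF.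
Qed.

Lemma R_conj w f : Rsub n m w -> inF n f -> Rsub n m (conj w f).
Proof.
move=> Hw Hf; apply: Gen_conj Hw.
- move=> u [r [g [Hr [Hg ->]]]]; apply: (inF_red (n:=n)); apply: inF_conj => //; exact: Rel_inF.
- exact: inF_red Hf.
- move=> u [r [g [Hr [Hg ->]]]]; apply: Gen_in; exists r, (wmul g f); split=> //.
  split; first exact: inF_mul.
  by rewrite conj_conj // ?(inF_red Hg) ?(inF_red Hf) ?(inF_red (Rel_inF Hr)).
Qed.

Lemma Gens_inF w : Gens n w -> inF n w.
Proof.
case=> [[i [j [Hi [Hij [Hj ->]]]]]|[[i [Hi ->]]|[[i [Hi ->]]|[i [Hi ->]]]]].
- by apply: inF_comm; apply: inF_gen; lia.
- by rewrite /comm3; fin.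
- rewrite /comm3; apply: inF_comm; first by apply: inF_comm; apply: inF_gen; lia.
  by apply: inF_mul; [|apply: inF_inv]; apply: inF_gen; lia.
- by fin.
Qed.

Lemma Gens_FF w : Gens n w -> FF n w.
Proof.
move=> Hw; have := Gens_inF Hw.
case: Hw=> [[i [j [Hi [Hij [Hj ->]]]]]|[[i [Hi ->]]|[[i [Hi ->]]|[i [Hi ->]]]]] HF;
  apply: Gen_in; rewrite ?/comm3.
- by exists (gen i), (gen j); split; [|split]=> //; apply: inF_gen; lia.
- by exists (comm (gen i) (gen i.+1)), (gen i); split; [|split]=> //;
    [apply: inF_comm|]; apply: inF_gen; lia.
- exists (comm (gen i) (gen i.+1)), (wmul (gen i) (winv (gen i.+1))); split; [|split]=> //.
  + by apply: inF_comm; apply: inF_gen; lia.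
  + by apply: inF_mul; [|apply: inF_inv]; apply: inF_gen; lia.
- by exists (comm (gen i) (gen i.+1)), (comm (gen i.+1) (gen i.+2)); split; [|split]=> //;
    apply: inF_comm; apply: inF_gen; lia.
Qed.

Lemma Gens_R w : Gens n w -> Rsub n m w.
Proof.
case=> [[i [j [Hi [Hij [Hj ->]]]]]|[[i [Hi ->]]|[[i [Hi ->]]|[i [Hi ->]]]]].
- by apply: rel_R; right; left; exists i, j.
- by apply: rel_R; right; right; left; exists i.
- have Hg : forall k, 0 < k < n -> reduced (gen k) by move=> k Hk; apply: (inF_red (n:=n)); apply: inF_gen.
  rewrite /comm3 key2; try (apply: Hg; lia); last by apply: (inF_red (n:=n)); apply: inF_comm; apply: inF_gen; lia.
  apply: Gen_inv; apply: R_conj; last by apply: inF_inv; apply: inF_gen; lia.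
  apply: Gen_mul; first apply: Gen_inv.
  + by apply: rel_R; right; right; left; exists i.
  + by apply: rel_R; right; right; right; left; exists i.
- by apply: rel_R; right; right; right; right; exists i.
Qed.

End T.
Hint Resolve wmul_red winv_red red1 : core.

Section U.
Variables n m : nat.
Notation H := (Hs n m).
Notation R := (Rsub n m).

Lemma RF_R w : RF n m w -> R w.
Proof.
apply: Gen_sub => u [r [f [Hr [Hf ->]]]].
exact: (Gen_mul (Gen_inv Hr) (R_conj Hr Hf)).
Qed.

Lemma HgenR u : Gens n u \/ RF n m u -> R u.
Proof. by case; [exact: Gens_R | exact: RF_R]. Qed.

Lemma H_R w : H w -> R w.
Proof. by apply: Gen_sub => u /HgenR. Qed.

Lemma H_inF w : H w -> inF n w.
Proof. by move/H_R; exact: R_inF. Qed.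

Lemma H_red w : H w -> reduced w.
Proof. by move/H_inF/inF_red. Qed.

Lemma R_red w : R w -> reduced w.
Proof. by move/R_inF/inF_red. Qed.

Lemma H_conj w f : H w -> inF n f -> H (conj w f).
Proof.
move=> Hw Hf; apply: Gen_conj Hw; first by move=> u /HgenR/R_red.
- exact: inF_red Hf.
- move=> u Hu; have Ru := HgenR Hu.
  rewrite conj_eq ?(R_red Ru) ?(inF_red Hf) //.
  apply: Gen_mul; first exact: Gen_in.
  by apply: Gen_in; right; apply: Gen_in; exists u, f.
Qed.

Lemma rel_H r : Relators n m r -> (exists i, 1 <= i <= n - 1 /\ r = wpow (gen i) m) \/ H r.
Proof.
case=> [Hp|[[i [j [Hi [Hij [Hj ->]]]]]|[[i [Hi ->]]|[[i [Hi ->]]|[i [Hi ->]]]]]]; [by left|right..].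
- by apply: Gen_in; left; left; exists i, j.
- by apply: Gen_in; left; right; left; exists i.
- have Hg : forall k, 0 < k < n -> reduced (gen k) by move=> k Hk; apply: (inF_red (n:=n)); apply: inF_gen.
  rewrite /comm3 (@key _ (gen i)); try (apply: Hg; lia);
    last by apply: (inF_red (n:=n)); fin.
  apply: Gen_mul; first by apply: Gen_in; left; right; left; exists i.
  apply: H_conj; last by fin.
  by apply: Gen_inv; apply: Gen_in; left; right; right; left; exists i.
- by apply: Gen_in; left; right; right; right; exists i.
Qed.

End U.
Hint Resolve wmul_red winv_red red1 : core.
Ltac rd ::= solve [repeat (apply wmul_red || apply winv_red || assumption || exact red1)].
Ltac gsimp ::= repeat (rewrite ?winvK; first [rewrite winvM | rewrite wmulA | rewrite wmulKV | rewrite wmulVK | rewrite wmulV | rewrite wmulVx | rewrite wmul1]; try rd); rewrite ?winvK.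

Section V.
Variables n m : nat.
Notation H := (Hs n m).
Notation R := (Rsub n m).

Definition cg x y := H (wmul x (winv y)).

Lemma cg_refl x : reduced x -> cg x x.
Proof. by move=> Hx; rewrite /cg wmulV //; exact: Gen_one. Qed.

Lemma cg_sym x y : reduced x -> reduced y -> cg x y -> cg y x.
Proof.
move=> Hx Hy /Gen_inv; rewrite /cg.
have -> : winv (wmul x (winv y)) = wmul y (winv x) by gsimp.
by [].
Qed.

Lemma cg_trans x y z : reduced x -> reduced y -> reduced z -> cg x y -> cg y z -> cg x z.
Proof.
move=> Hx Hy Hz H1 H2; have := Gen_mul H1 H2.
have -> : wmul (wmul x (winv y)) (wmul y (winv z)) = wmul x (winv z) by gsimp.
by [].
Qed.

Lemma cg_mulr x y f : reduced x -> reduced y -> reduced f -> cg x y -> cg (wmul x f) (wmul y f).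
Proof.
move=> Hx Hy Hf; rewrite /cg.
have -> : wmul (wmul x f) (winv (wmul y f)) = wmul x (winv y) by gsimp.
by [].
Qed.

Lemma cg_mull x y f : reduced x -> reduced y -> inF n f -> cg x y -> cg (wmul f x) (wmul f y).
Proof.
move=> Hx Hy Hf Hc; have Hf' := inF_red Hf; rewrite /cg.
have -> : wmul (wmul f x) (winv (wmul f y)) = conj (wmul x (winv y)) (winv f).
  by rewrite /conj; gsimp.
by apply: H_conj => //; exact: inF_inv.
Qed.

Lemma cg_H w : H w -> cg w wone.
Proof. by move=> Hw; rewrite /cg /= (wmul1 (H_red Hw)). Qed.

Lemma cg_conj r f : R r -> inF n f -> cg (conj r f) r.
Proof.
move=> Hr Hf; have Hr' := R_red Hr; have Hf' := inF_red Hf; rewrite /cg.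
have -> : wmul (conj r f) (winv r) = conj (comm r f) (winv r) by rewrite /conj /comm; gsimp.
apply: H_conj; last by apply: inF_inv; exact: R_inF Hr.
by apply: Gen_in; right; apply: Gen_in; exists r, f.
Qed.

Lemma cg_swap r x : R r -> inF n x -> cg (wmul r x) (wmul x r).
Proof.
move=> Hr Hx; have Hr' := R_red Hr; have Hx' := inF_red Hx; rewrite /cg.
have -> : wmul (wmul r x) (winv (wmul x r)) = comm (winv r) (winv x) by rewrite /comm; gsimp.
apply: Gen_in; right; apply: Gen_in; exists (winv r), (winv x); split; first exact: Gen_inv.
by split=> //; exact: inF_inv.
Qed.

End V.
Hint Resolve wmul_red winv_red red1 : core.
Ltac rd ::= solve [repeat (apply wmul_red || apply winv_red || assumption || exact red1)].
Ltac gsimp ::= repeat (rewrite ?winvK; first [rewrite winvM | rewrite wmulA | rewrite wmulKV | rewrite wmulVK | rewrite wmulV | rewrite wmulVx | rewrite wmul1]; try rd); rewrite ?winvK.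

Lemma wpow_red x k : reduced (wpow x k).
Proof. by elim: k => //= k IH; auto. Qed.
Hint Resolve wpow_red : core.

Lemma wpowD x a b : wpow x (a + b) = wmul (wpow x a) (wpow x b).
Proof. elim: a => //= a IH; rewrite IH wmulA //. Qed.

Section X.
Variables n m : nat.
Notation H := (Hs n m).
Notation R := (Rsub n m).
Notation cg := (cg n m).

Definition P i := wpow (gen i) m.
Definition Dl (L : seq nat) (a : nat -> nat) :=
  foldr (fun i acc => wmul (wpow (P i) (a i)) acc) wone L.
Definition rngL (L : seq nat) := all (fun i => (0 < i) && (i < n)) L.

Lemma Dl_red L a : reduced (Dl L a).
Proof. by elim: L => //= i L IH; auto. Qed.
Hint Resolve Dl_red : core.
Ltac rd ::= solve [repeat (apply wmul_red || apply winv_red || apply wpow_red || apply Dl_red || assumption || exact red1)].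

Lemma R_wpow x k : R x -> R (wpow x k).
Proof. by move=> Hx; elim: k => [|k IH] /=; [exact: Gen_one | exact: Gen_mul]. Qed.

Lemma R_P i : 0 < i < n -> R (P i).
Proof. by move=> Hi; apply: rel_R; left; exists i; split=> //; lia. Qed.

Lemma Dl_R L a : rngL L -> R (Dl L a).
Proof.
elim: L => [_|i L IH /andP[Hi HL]] /=; first exact: Gen_one.
by apply: Gen_mul; [apply: R_wpow; exact: R_P | exact: IH].
Qed.

Lemma Dl_inF L a : rngL L -> inF n (Dl L a).
Proof. by move=> HL; apply: (R_inF (m:=m)); exact: Dl_R. Qed.

Lemma Dl_ext L a b : {in L, a =1 b} -> Dl L a = Dl L b.
Proof.
elim: L => //= i L IH Hab; rewrite Hab ?mem_head // IH // => j Hj.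
by apply: Hab; rewrite in_cons Hj orbT.
Qed.

Lemma cg_eql x y z : x = y -> cg y z -> cg x z.
Proof. by move=> ->. Qed.

Lemma Dl_add L c a : rngL L ->
  cg (wmul (Dl L c) (Dl L a)) (Dl L (fun i => c i + a i)).
Proof.
elim: L => [_|i L IH /andP[Hi HL]] /=.
  exact: cg_refl.
have Rc := R_wpow (c i) (R_P Hi); have Ra := R_wpow (a i) (R_P Hi).
have Fc := R_inF Rc; have Fa := R_inF Ra.
have HDc := Dl_inF c HL; have HDa := Dl_inF a HL.
set Pc := wpow (P i) (c i) in Rc Fc *; set Pa := wpow (P i) (a i) in Ra Fa *.
set Dc := Dl L c in HDc *; set Da := Dl L a in HDa *.
have rPc : reduced Pc by exact: wpow_red. have rPa : reduced Pa by exact: wpow_red.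
have rDc : reduced Dc by exact: Dl_red. have rDa : reduced Da by exact: Dl_red.
apply: (@cg_trans _ _ _ (wmul Pc (wmul (wmul Pa Dc) Da))); try rd.
  apply: (cg_eql (y := wmul Pc (wmul (wmul Dc Pa) Da))); first by gsimp.
  apply: cg_mull => //; try rd; apply: cg_mulr => //; try rd.
  by apply: cg_sym; try rd; apply: cg_swap.
apply: (cg_eql (y := wmul Pc (wmul Pa (wmul Dc Da)))); first by gsimp.
rewrite wpowD -/Pc -/Pa wmulA //.
apply: cg_mull => //; try rd; try exact: R_inF Rc.
apply: cg_mull => //; try rd; try exact: R_inF Ra.
exact: IH.
Qed.

Lemma Dl0 L a : {in L, forall i, a i = 0} -> Dl L a = wone.
Proof. by elim: L => //= i L IH Ha; rewrite Ha ?mem_head //= IH // => j Hj; apply: Ha; rewrite in_cons Hj orbT. Qed.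

Lemma Dl_delta L i : i \in L -> uniq L ->
  Dl L (fun j => if j == i then 1 else 0) = P i.
Proof.
elim: L => //= j L IH; rewrite in_cons => /orP[/eqP <-|Hi] /andP[HjL HL].
- have rP : reduced (P i) by exact: wpow_red.
  rewrite eqxx /= Dl0; first by rewrite !wmul1.
  by move=> k Hk; case: eqP => // E; rewrite -E Hk in HjL.
- have -> : (j == i) = false by apply/negbTE; apply: contraNneq HjL => ->.
  by rewrite IH.
Qed.

Definition D a := Dl (iota 1 n.-1) a.

Lemma rngI : rngL (iota 1 n.-1).
Proof. by apply/allP => i; rewrite mem_iota; lia. Qed.

Lemma D_inF a : inF n (D a).
Proof. exact: Dl_inF rngI. Qed.

Lemma Rmain w : R w -> exists a b, cg (wmul w (D a)) (D b).
Proof.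
elim=> {w} [|u [r [f [Hr [Hf ->]]]]|x y Gx [a [b IHx]] Gy [c [d IHy]]|x Gx [a [b IHx]]].
- exists (fun _ => 0), (fun _ => 0); apply: cg_refl; exact: Dl_red.
- have Rr := rel_R Hr; have rr := R_red Rr; have rf := inF_red Hf.
  have D0 : D (fun _ => 0) = wone by apply: Dl0.
  case: (rel_H Hr) => [[i [Hi Er]]|Hh].
  + exists (fun _ => 0), (fun j => if j == i then 1 else 0).
    rewrite D0 wmul1 /D ?Dl_delta ?iota_uniq ?mem_iota; try rd; try lia.
    rewrite /P -Er; exact: cg_conj.
  + exists (fun _ => 0), (fun _ => 0); rewrite D0 wmul1; try rd.
    by apply: cg_H; apply: H_conj.
- have rx := R_red Gx; have ry := R_red Gy; have Fx := R_inF Gx; have Fy := R_inF Gy.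
  have HD := D_inF. have rD : forall a, reduced (D a) by move=> e; exact: Dl_red.
  exists (fun i => c i + a i), (fun i => b i + d i).
  apply: (@cg_trans _ _ _ (wmul (wmul x y) (wmul (D c) (D a)))); try rd.
    apply: cg_mull; try rd; first by apply: inF_mul.
    by apply: cg_sym; try rd; apply: Dl_add; exact: rngI.
  apply: (cg_eql (y := wmul x (wmul (wmul y (D c)) (D a)))); first by gsimp.
  apply: (@cg_trans _ _ _ (wmul x (wmul (D d) (D a)))); try rd.
    by apply: cg_mull; try rd; apply: cg_mulr; try rd.
  apply: (@cg_trans _ _ _ (wmul x (D (fun i => a i + d i)))); try rd.
    apply: cg_mull; try rd.
    have -> : D (fun i => a i + d i) = D (fun i => d i + a i) by apply: Dl_ext => i _; lia.
    by apply: Dl_add; exact: rngI.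
  apply: (@cg_trans _ _ _ (wmul x (wmul (D a) (D d)))); try rd.
    apply: cg_mull; try rd; apply: cg_sym; try rd; apply: Dl_add; exact: rngI.
  apply: (cg_eql (y := wmul (wmul x (D a)) (D d))); first by gsimp.
  apply: (@cg_trans _ _ _ (wmul (D b) (D d))); try rd.
    by apply: cg_mulr; try rd.
  by apply: Dl_add; exact: rngI.
- have rx := R_red Gx; have Fx := R_inF Gx.
  have rD : forall a, reduced (D a) by move=> e; exact: Dl_red.
  exists b, a.
  apply: (@cg_trans _ _ _ (wmul (winv x) (wmul x (D a)))); try rd.
    apply: cg_mull; try rd; first exact: inF_inv.
    by apply: cg_sym; try rd.
  rewrite wmulVK; try rd; exact: cg_refl.
Qed.

End X.

Definition sg i (a : letter) : Z := if a.1 == i then (if a.2 then (-1)%Z else 1%Z) else 0%Z.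
Definition esum i (w : word) : Z := foldr (fun a acc => (sg i a + acc)%Z) 0%Z w.

Lemma sg_linv i a : sg i (linv a) = (- sg i a)%Z.
Proof. by case: a => j [] /=; rewrite /sg /=; case: eqP. Qed.

Lemma esum_push i a w : esum i (push a w) = (sg i a + esum i w)%Z.
Proof.
case: w => //= b w; case: ifP => //= /eqP ->; rewrite sg_linv; lia.
Qed.

Lemma esum_mul i x y : esum i (wmul x y) = (esum i x + esum i y)%Z.
Proof. elim: x => //= a x IH; rewrite esum_push IH; lia. Qed.

Lemma esum_cat i x y : esum i (x ++ y) = (esum i x + esum i y)%Z.
Proof. elim: x => //= a x IH; rewrite IH; lia. Qed.

Lemma esum_inv i x : esum i (winv x) = (- esum i x)%Z.
Proof.
elim: x => //= a x IH; rewrite winv_cons esum_cat IH /= sg_linv; lia.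
Qed.

Lemma esum_comm i x y : esum i (comm x y) = 0%Z.
Proof. rewrite /comm !esum_mul !esum_inv; lia. Qed.

Lemma esum_Gen i (S : word -> Prop) w :
  (forall u, S u -> esum i u = 0%Z) -> Gen S w -> esum i w = 0%Z.
Proof.
move=> HS; elim=> {w} [//|u /HS //|x y _ Hx _ Hy|x _ Hx].
- by rewrite esum_mul Hx Hy.
- by rewrite esum_inv Hx.
Qed.

Lemma esum_FF n i w : FF n w -> esum i w = 0%Z.
Proof. by apply: esum_Gen => u [a [b [_ [_ ->]]]]; exact: esum_comm. Qed.

Lemma esum_H n m i w : Hs n m w -> esum i w = 0%Z.
Proof.
apply: esum_Gen => u [Hu|Hu].
- case: Hu => [[j [k [_ [_ [_ ->]]]]]|[[j [_ ->]]|[[j [_ ->]]|[j [_ ->]]]]];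
  exact: esum_comm.
- by apply: esum_Gen Hu => v [r [f [_ [_ ->]]]]; exact: esum_comm.
Qed.

Lemma esum_wpow i x k : esum i (wpow x k) = (Z.of_nat k * esum i x)%Z.
Proof. elim: k => [//|k IH]; rewrite (_ : wpow x k.+1 = wmul x (wpow x k)) // esum_mul IH Nat2Z.inj_succ; ring. Qed.

Lemma esum_P m i j : esum i (P m j) = if j == i then Z.of_nat m else 0%Z.
Proof.
rewrite /P esum_wpow /= /sg /=; case: eqP => _; lia.
Qed.

Lemma esum_Dl m i L a : uniq L ->
  esum i (Dl m L a) = if i \in L then (Z.of_nat (a i) * Z.of_nat m)%Z else 0%Z.
Proof.
elim: L => //= j L IH /andP[HjL HL]; rewrite esum_mul IH // esum_wpow esum_P in_cons.
case: (eqVneq j i) => [E|Ne] /=.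
- by subst j; rewrite (negbTE HjL); lia.
- by case: (i \in L); lia.
Qed.

Theorem mainTheorem2 (n m : nat) (hn : 3 <= n) (hm : 2 <= m) :
  (forall w, Gens n w -> Rsub n m w /\ FF n w) /\
  (forall w, Rsub n m w -> FF n w ->
     Gen (fun u => Gens n u \/ RF n m u) w).
Proof.
split.
  by move=> w Hw; split; [exact: Gens_R | exact: Gens_FF].
move=> w Rw Fw; have [a [b Hab]] := Rmain Rw.
have Eab : D n m a = D n m b.
  apply: Dl_ext => i Hi; have := esum_H i Hab.
  rewrite !esum_mul esum_inv (esum_FF i Fw) /D !esum_Dl ?iota_uniq // Hi.
  move=> E.
  have E' : (Z.of_nat (a i) * Z.of_nat m = Z.of_nat (b i) * Z.of_nat m)%Z by lia.
  have := proj1 (Z.mul_cancel_r (Z.of_nat (a i)) (Z.of_nat (b i)) (Z.of_nat m) ltac:(lia)) E'.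
  lia.
move: Hab; rewrite /cg Eab wmulA ?wmulV ?wmul1 //.
all: first [exact: R_red Rw | exact: Dl_red | apply: winv_red; exact: Dl_red].
Qed.
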